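(* Let $b\ge2$ be an integer and $\mathbf{x}=x_1x_2\ldots$ an infinite word over $\{0,1,\ldots,b-1\}$ which is not eventually periodic. Then the irrational number $\xi_{\mathbf{x},b}=\sum_{k\ge1}x_k b^{-k}$ satisfies $$\mu(\xi_{\mathbf{x},b})\ge\frac{\mathrm{rep}(\mathbf{x})}{\mathrm{rep}(\mathbf{x})-1},$$ where the right-hand side is $+\infty$ if $\mathrm{rep}(\mathbf{x})=1$ (and is $1$ if $\mathrm{rep}(\mathbf{x})=+\infty$).
   Context: With $x_i^j=x_i\cdots x_j$, $r(n,\mathbf{x})=\min\{m\ge1:\ x_i^{i+n-1}=x_{m-n+1}^{m}\text{ for some } 1\le i\le m-n\}$ and $\mathrm{rep}(\mathbf{x})=\liminf_{n\to\infty}r(n,\mathbf{x})/n$. The irrationality exponent $\mu(\xi)$ of a real number $\xi$ is the supremum of the real numbers $\mu$ such that $|\xi-p/q|<q^{-\mu}$ has infinitely many solutions in rationals $p/q$. *)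

(* Defs.v *)
From HB Require Import structures.
From mathcomp Require Import all_boot all_order all_algebra.
From mathcomp Require Import all_classical all_reals all_analysis.
Set Implicit Arguments. Unset Strict Implicit. Unset Printing Implicit Defensive.
Import Order.TTheory GRing.Theory Num.Theory.
Import numFieldNormedType.Exports.
Local Open Scope classical_set_scope.
Local Open Scope ring_scope.

(* Infinite words x = x_1 x_2 ... are functions x : nat -> nat, 1-indexed:
   the letter x_k is x k for k >= 1 (the value x 0 is never used). *)

Definition eventually_periodic (x : nat -> nat) : Prop :=
  exists p N : nat, (0 < p)%N /\ forall k, (N <= k)%N -> x (k + p)%N = x k.

Definition r_set (x : nat -> nat) (n : nat) : set nat :=
  [set m | (1 <= m)%N /\
     exists i : nat, [/\ (1 <= i)%N, (i <= m - n)%N &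
        forall j : nat, (j < n)%N -> x (i + j)%N = x (m - n + 1 + j)%N]].

(* r(n,x) = min (r_set x n), as an extended real (the minimum of a set of
   naturals is its infimum) *)
Definition r_fun (R : realType) (x : nat -> nat) (n : nat) : \bar R :=
  ereal_inf [set ((m%:R : R)%:E) | m in r_set x n].

Definition rep (R : realType) (x : nat -> nat) : \bar R :=
  limn_einf (fun n => (r_fun R x n * ((n%:R : R)^-1)%:E)%E).

Definition xi_word (R : realType) (x : nat -> nat) (b : nat) : R :=
  limn (fun N => \sum_(1 <= k < N) ((x k)%:R / (b%:R) ^+ k : R)).

Definition irrationality_exponent (R : realType) (xi : R) : \bar R :=
  ereal_sup [set mu%:E | mu in
    [set mu : R | infinite_set
       [set r : rat | `|xi - ratr r| < ((denq r)%:~R : R) `^ (- mu)]]].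

Definition rep_bound (R : realType) (t : \bar R) : \bar R :=
  match t with
  | +oo%E => 1%E
  | -oo%E => +oo%E
  | EFin s => if s == 1 then +oo%E else (s / (s - 1))%:E
  end.

(* Main.v *)
Require Import Defs.
From HB Require Import structures.
From mathcomp Require Import all_boot all_order all_algebra.
From mathcomp Require Import all_classical all_reals all_analysis.
From mathcomp Require Import lra ring zify.
Set Implicit Arguments. Unset Strict Implicit. Unset Printing Implicit Defensive.
Import Order.TTheory GRing.Theory Num.Theory.
Import numFieldNormedType.Exports.
Local Open Scope classical_set_scope.
Local Open Scope ring_scope.

Section Series.
Variable R : realType.
Variable b : nat.
Hypothesis hb : (2 <= b)%N.

Definition dsum (z : nat -> nat) (N : nat) : R :=
  \sum_(1 <= k < N) ((z k)%:R / (b%:R) ^+ k : R).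
Definition val (z : nat -> nat) : R := limn (dsum z).
Definition digits (z : nat -> nat) := forall k, (1 <= k)%N -> (z k < b)%N.

Let c : R := (b%:R)^-1.
Lemma bpos : (0 : R) < b%:R. Proof. rewrite ltr0n; by case: b hb. Qed.
Lemma bc : (b%:R : R) * c = 1. Proof. by rewrite /c divff // gt_eqF // bpos. Qed.
Lemma cpos : 0 < c. Proof. by rewrite /c invr_gt0 bpos. Qed.
Lemma cle1 : c <= 1.
Proof. rewrite /c invr_le1 ?bpos ?unitfE ?gt_eqF ?bpos //. rewrite ler1n. by case: b hb => [|[]]. Qed.
Lemma term_c z k : ((z k)%:R / (b%:R) ^+ k : R) = (z k)%:R * c ^+ k.
Proof. by rewrite /c exprVn. Qed.

Lemma dsumS z N : (1 <= N)%N -> dsum z N.+1 = dsum z N + (z N)%:R * c ^+ N.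
Proof. by move=> hN; rewrite /dsum big_nat_recr //= term_c. Qed.

Lemma dsum_ge0 z N : 0 <= dsum z N.
Proof. apply: sumr_ge0 => k _; rewrite term_c; apply: mulr_ge0 => //; apply: exprn_ge0; exact: ltW cpos. Qed.

Lemma dsum_le z N : digits z -> dsum z N.+1 <= 1 - c ^+ N.
Proof.
move=> hz; elim: N => [|N IH].
  by rewrite /dsum big_geq // expr0 subrr.
rewrite dsumS //.
have hzN : (z N.+1)%:R <= (b%:R - 1 : R).
  have := hz N.+1 isT; rewrite -ltnS => /ltnSE h.
  have -> : (b%:R - 1 : R) = (b.-1)%:R.
    by rewrite -[in LHS](prednK (ltnW hb)) -addn1 natrD addrK.
  by rewrite ler_nat -ltnS (prednK (ltnW hb)).
have e : (b%:R - 1) * c ^+ N.+1 = c ^+ N - c ^+ N.+1.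
  by rewrite mulrBl exprS mulrA bc mul1r mul1r.
have := ler_wpM2r (exprn_ge0 N.+1 (ltW cpos)) hzN.
rewrite e => h. lra.
Qed.

Lemma dsum_le1 z N : digits z -> dsum z N <= 1.
Proof.
move=> hz; case: N => [|N]; first by rewrite /dsum big_geq.
apply: (le_trans (dsum_le N hz)); rewrite lerBlDr lerDl; apply: exprn_ge0; exact: ltW cpos.
Qed.

Lemma dsum_nd z : nondecreasing_seq (dsum z).
Proof.
apply/nondecreasing_seqP => n; case: n => [|n]; first by rewrite /dsum !big_geq.
rewrite (@dsumS z n.+1) // lerDl; apply: mulr_ge0 => //; apply: exprn_ge0; exact: ltW cpos.
Qed.

Lemma dsum_cvg z : digits z -> dsum z @ \oo --> val z.
Proof.
move=> hz; apply/cvg_ex; exists (sup (range (dsum z))).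
apply: nondecreasing_cvgn; first exact: dsum_nd.
by exists 1 => _ [n _ <-]; exact: dsum_le1.
Qed.

Lemma val_ge0 z : digits z -> 0 <= val z.
Proof.
move=> hz; apply: limr_ge; first exact: (cvgP _ (dsum_cvg hz)).
by near=> n; exact: dsum_ge0.
Unshelve. all: end_near.
Qed.

Lemma val_le1 z : digits z -> val z <= 1.
Proof.
move=> hz; apply: limr_le; first exact: (cvgP _ (dsum_cvg hz)).
by near=> n; exact: dsum_le1.
Unshelve. all: end_near.
Qed.

Definition shft (z : nat -> nat) k := fun j => z (j + k)%N.

Lemma digits_shft z k : digits z -> digits (shft z k).
Proof. by move=> hz j hj; apply: hz; rewrite addn_gt0 hj. Qed.

Lemma dsum_shift z k N :
  dsum z (N.+1 + k) = dsum z k.+1 + c ^+ k * dsum (shft z k) N.+1.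
Proof.
elim: N => [|N IH].
  by rewrite /dsum [X in _ + _ * X]big_geq // mulr0 addr0 add1n.
rewrite (@dsumS z (N.+1 + k)) ?addn_gt0 // IH (@dsumS (shft z k) N.+1) //.
rewrite mulrDr addrA; congr (_ + _).
by rewrite /shft mulrCA -exprD addnC.
Qed.

Lemma val_shift z k : digits z ->
  val z = dsum z k.+1 + c ^+ k * val (shft z k).
Proof.
move=> hz; rewrite {1}/val; apply: cvg_lim => //.
have h := dsum_cvg (digits_shft k hz).
have h1 : (fun n => dsum (shft z k) n.+1) @ \oo --> val (shft z k).
  by rewrite (cvg_shiftS (fun n => dsum (shft z k) n)).
have h2 : (fun n => dsum z k.+1 + c ^+ k * dsum (shft z k) n.+1) @ \oo -->
   dsum z k.+1 + c ^+ k * val (shft z k).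
  by apply: cvgD; [exact: cvg_cst | apply: cvgMr; exact: h1].
rewrite -(cvg_shiftn k.+1 (dsum z)).
apply: cvg_trans h2; apply: near_eq_cvg; near=> n.
by rewrite /= -dsum_shift addSnnS.
Unshelve. all: end_near.
Qed.

Lemma val_ext z1 z2 : (forall j, (1 <= j)%N -> z1 j = z2 j) -> val z1 = val z2.
Proof.
move=> h; rewrite /val (_ : dsum z1 = dsum z2) //; apply: funext => N.
by apply: eq_big_nat => k /andP[k1 _]; rewrite h.
Qed.

Lemma dsum_agree z1 z2 m : (forall j, (1 <= j <= m)%N -> z1 j = z2 j) ->
  dsum z1 m.+1 = dsum z2 m.+1.
Proof. by move=> h; apply: eq_big_nat => k hk; rewrite h. Qed.

Lemma val_agree z1 z2 m : digits z1 -> digits z2 ->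
  (forall j, (1 <= j <= m)%N -> z1 j = z2 j) ->
  `|val z1 - val z2| <= c ^+ m.
Proof.
move=> h1 h2 h; rewrite (val_shift m h1) (val_shift m h2) (dsum_agree h).
have a1 := val_ge0 (digits_shft m h1); have b1 := val_le1 (digits_shft m h1).
have a2 := val_ge0 (digits_shft m h2); have b2 := val_le1 (digits_shft m h2).
have cp : 0 < c ^+ m by apply: exprn_gt0; exact: cpos.
set d := dsum z2 m.+1; set v1 := val (shft z1 m); set v2 := val (shft z2 m).
have -> : d + c ^+ m * v1 - (d + c ^+ m * v2) = c ^+ m * (v1 - v2) by ring.
rewrite normrM (gtr0_norm cp) -[leRHS]mulr1 ler_pM2l //.
rewrite ler_norml; apply/andP; split; rewrite /v1 /v2; lra.
Qed.

Lemma val_lt1 z : digits z -> (exists j, (1 <= j)%N /\ ((z j).+1 < b)%N) ->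
  val z < 1.
Proof.
move=> hz [j [j1 hj]]; rewrite (val_shift j hz) dsumS //.
have := val_le1 (digits_shft j hz) => hv.
have hd := dsum_le j.-1 hz; rewrite (prednK j1) in hd.
have hzj : (z j)%:R <= (b%:R - 2 : R).
  have -> : (b%:R - 2 : R) = (b - 2)%:R by rewrite natrB.
  by rewrite ler_nat leq_subRL // addnC addn2.
have cp : 0 < c ^+ j by apply: exprn_gt0; exact: cpos.
have e : c ^+ j.-1 = b%:R * c ^+ j.
  by rewrite -{2}(prednK j1) exprS mulrA bc mul1r.
have := ler_wpM2r (ltW cp) hzj.
have := ler_wpM2l (ltW cp) hv.
rewrite e in hd => ? ?.
have : (b%:R - 2) * c ^+ j + c ^+ j < b%:R * c ^+ j by nra.
nra.
Qed.

Lemma val_gt0 z : digits z -> (exists j, (1 <= j)%N /\ (0 < z j)%N) ->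
  0 < val z.
Proof.
move=> hz [j [j1 hj]]; rewrite (val_shift j hz) dsumS //.
have := val_ge0 (digits_shft j hz) => hv.
have hd := dsum_ge0 z j.
have cp : 0 < c ^+ j by apply: exprn_gt0; exact: cpos.
have hzj : (1 : R) <= (z j)%:R by rewrite ler1n.
have := ler_wpM2r (ltW cp) hzj.
have := mulr_ge0 (ltW cp) hv.
nra.
Qed.

Lemma val_neq x y : digits x -> digits y ->
  (forall N, exists j, (N < j)%N /\ ((x j).+1 < b)%N) ->
  (forall N, exists j, (N < j)%N /\ (0 < x j)%N) ->
  (exists j, (1 <= j)%N /\ x j <> y j) -> val x != val y.
Proof.
move=> hx hy H1 H0 hex.
have hP : exists k, (1 <= k)%N && (x k != y k).
  by case: hex => j [j1 hj]; exists j; rewrite j1; apply/eqP.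
case: (ex_minnP hP) => k /andP[k1 hk] kmin.
have hag : forall j, (1 <= j <= k.-1)%N -> x j = y j.
  move=> j /andP[j1 jk]; apply/eqP; apply: contraT => hne.
  have := kmin j; rewrite j1 hne => /(_ isT); rewrite leqNgt.
  by rewrite -(prednK k1) ltnS jk.
have hd := dsum_agree hag; rewrite (prednK k1) in hd.
rewrite (val_shift k hx) (val_shift k hy) (dsumS _ k1) (dsumS _ k1) hd.
have vx1 : val (shft x k) < 1.
  apply: val_lt1; first exact: digits_shft.
  case: (H1 k) => j [jk hj]; exists (j - k)%N; split; first by rewrite subn_gt0.
  by rewrite /shft subnK // ltnW.
have vx0 : 0 < val (shft x k).
  apply: val_gt0; first exact: digits_shft.
  case: (H0 k) => j [jk hj]; exists (j - k)%N; split; first by rewrite subn_gt0.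
  by rewrite /shft subnK // ltnW.
have vy0 := val_ge0 (digits_shft k hy).
have vy1 := val_le1 (digits_shft k hy).
have cp : 0 < c ^+ k by apply: exprn_gt0; exact: cpos.
set X := val (shft x k) in vx1 vx0 *; set Y := val (shft y k) in vy0 vy1 *.
set D := dsum y k.
rewrite -subr_eq0.
have -> : D + (x k)%:R * c ^+ k + c ^+ k * X - (D + (y k)%:R * c ^+ k + c ^+ k * Y)
   = c ^+ k * ((x k)%:R - (y k)%:R + X - Y) by ring.
suff : (x k)%:R - (y k)%:R + X - Y != 0 :> R.
  by apply: contra; rewrite mulf_eq0 gt_eqF //=.
case: (ltngtP (x k) (y k)) => hxy.
- have : ((x k).+1%:R : R) <= (y k)%:R by rewrite ler_nat.
  rewrite -natr1 => h; apply: ltr0_neq0; rewrite /X /Y in vx1 vx0 vy0 vy1 *; lra.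
- have : ((y k).+1%:R : R) <= (x k)%:R by rewrite ler_nat.
  rewrite -natr1 => h; apply: lt0r_neq0; rewrite /X /Y in vx1 vx0 vy0 vy1 *; lra.
- by rewrite hxy eqxx in hk.
Qed.

Lemma dsum_nat y K :
  (b%:R : R) ^+ K * dsum y K.+1 = (\sum_(1 <= k < K.+1) y k * b ^ (K - k))%N%:R.
Proof.
rewrite /dsum mulr_sumr natr_sum; apply: eq_big_nat => k /andP[k1 kK].
rewrite term_c natrM natrX mulrCA; congr (_ * _).
rewrite -{1}(subnK (ltnSE kK)) exprD -mulrA -exprMn bc expr1n mulr1.
by [].
Qed.

Lemma val_rat y i p : digits y -> (0 < p)%N ->
  (forall j, (i < j)%N -> y (j + p)%N = y j) ->
  exists r : rat, ratr r = val y /\ (denq r <= (b ^ (i + p))%N%:Z).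
Proof.
move=> hy hp hper.
have hext : val (shft y (i + p)) = val (shft y i).
  apply: val_ext => j j1; rewrite /shft addnA hper //.
  by rewrite -{1}(add0n i) ltn_add2r.
have e1 := val_shift (i + p) hy; have e0 := val_shift i hy.
rewrite hext in e1.
set V := val (shft y i) in e1 e0.
have [A1 f1] : exists A1 : nat, (b%:R : R) ^+ (i + p) * val y = A1%:R + V.
  exists (\sum_(1 <= k < (i + p).+1) y k * b ^ (i + p - k))%N.
  by rewrite -dsum_nat {1}e1 mulrDr mulrA -exprMn bc expr1n mul1r.
have [A0 f0] : exists A0 : nat, (b%:R : R) ^+ i * val y = A0%:R + V.
  exists (\sum_(1 <= k < i.+1) y k * b ^ (i - k))%N.
  by rewrite -dsum_nat {1}e0 mulrDr mulrA -exprMn bc expr1n mul1r.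
have hbi : (b ^ i < b ^ (i + p))%N.
  by rewrite ltn_exp2l // -{1}(addn0 i) ltn_add2l.
have [D [Dpos [DE hD]]] : exists D : nat, [/\ (0 < D)%N, D = (b ^ (i + p) - b ^ i)%N &
   (D%:R : R) * val y = A1%:R - A0%:R].
  exists (b ^ (i + p) - b ^ i)%N; split; [by rewrite subn_gt0 | by [] |].
  rewrite (natrB _ (ltnW hbi)) !natrX mulrBl f1 f0.
  by rewrite opprD addrACA subrr addr0.
exists (fracq (A1%:Z - A0%:Z, D%:Z)); split.
  rewrite fracqE /= fmorph_div /= !ratr_int.
  apply: (@mulfI _ (D%:R)); first by rewrite pnatr_eq0 -lt0n.
  rewrite hD mulrC divfK; last by rewrite pnatr_eq0 -lt0n.
  by rewrite rmorphB.
rewrite den_fracq /=.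
have -> : (D%:Z != 0) = true by rewrite eqz_nat -lt0n Dpos.
rewrite lez_nat; apply: leq_trans (leq_div _ _) _.
rewrite DE; exact: leq_subr.
Qed.

Definition Mset (xi : R) (mu : R) := infinite_set
  [set r : rat | `|xi - ratr r| < ((denq r)%:~R : R) `^ (- mu)].

Lemma pow_bound mu K m (d : int) : 0 <= mu -> mu * K%:R < m%:R ->
  (0 < d) -> (d <= (b ^ K)%N%:Z) ->
  c ^+ m < (d%:~R : R) `^ (- mu).
Proof.
move=> mu0 hK d0 dK.
have bp := bpos.
rewrite powRN /c exprVn.
have hd0 : (0 : R) < d%:~R by rewrite ltr0z.
have h1 : (d%:~R : R) `^ mu <= ((b ^ K)%N%:R : R) `^ mu.
  apply: ge0_ler_powR => //; rewrite ?nnegrE; [exact: ltW | by [] |].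
  by rewrite -(ler_int R) in dK.
have h2 : ((b ^ K)%N%:R : R) `^ mu = (b%:R : R) `^ (K%:R * mu).
  by rewrite natrX -powR_mulrn ?ltW // powRrM.
have h3 : (b%:R : R) `^ (K%:R * mu) < (b%:R : R) ^+ m.
  rewrite -powR_mulrn ?ltW // /powR gt_eqF // ltr_expR ltr_pM2r.
    by rewrite mulrC.
  by rewrite ln_gt0 // ltr1n.
have hp : 0 < (d%:~R : R) `^ mu by apply: powR_gt0.
rewrite -[X in X < _]invrK ltf_pV2 ?posrE ?invr_gt0 ?exprn_gt0 //.
rewrite invrK; apply: le_lt_trans h1 _; rewrite h2 //.
Qed.

Lemma eps_seq (xi : R) (s : seq rat) : exists2 eps : R, 0 < eps &
  forall r, r \in s -> ratr r != xi -> eps <= `|xi - ratr r|.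
Proof.
elim: s => [|a s [e e0 he]]; first by exists 1.
case: (eqVneq (ratr a) xi) => ha.
  exists e => // r; rewrite inE => /orP[/eqP ->|]; first by rewrite ha eqxx.
  exact: he.
exists (Num.min e `|xi - ratr a|).
  by rewrite lt_min e0 normr_gt0 subr_eq0 eq_sym ha.
move=> r; rewrite inE => /orP[/eqP ->|rs] hr; first by rewrite ge_min lexx orbT.
by rewrite ge_min he.
Qed.

Lemma M_of xi mu : 0 <= mu ->
  (forall N, exists r K m, [/\ (N <= m)%N, mu * K%:R < m%:R, ratr r != xi,
      `|xi - ratr r| <= c ^+ m & denq r <= (b ^ K)%N%:Z]) -> Mset xi mu.
Proof.
move=> mu0 H /finite_seqP [s hs].
have [eps e0 he] := eps_seq xi s.
set N := Num.bound (eps^-1).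
have hN : eps^-1 < N%:R by apply: archi_boundP; rewrite invr_ge0 ltW.
have [r [K [m [hm hK hr hd hden]]]] := H N.
have hin : `|xi - ratr r| < ((denq r)%:~R : R) `^ (- mu).
  apply: le_lt_trans hd _; apply: (pow_bound mu0 hK) => //.
have rS : r \in s.
  have : [set` s] r by rewrite -hs.
  by [].
have := he r rS hr.
have cm : c ^+ m <= c ^+ N.
  by apply: ler_wiXn2l => //; [exact: ltW cpos | exact: cle1].
have cN : c ^+ N < eps.
  rewrite /c exprVn -natrX.
  rewrite -[eps]invrK ltf_pV2 ?posrE ?invr_gt0 ?ltr0n ?expn_gt0 ?e0 ?(ltnW hb) //.
  apply: lt_trans hN _; rewrite ltr_nat; exact: ltn_expl.
move=> h; have : eps < eps by apply: le_lt_trans h (le_lt_trans hd (le_lt_trans cm cN)).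
by rewrite ltxx.
Qed.

Definition eper (x : nat -> nat) : Prop :=
  exists p N : nat, (0 < p)%N /\ forall k, (N <= k)%N -> x (k + p)%N = x k.

Lemma nep_lt x : digits x -> ~ eper x ->
  forall N, exists j, (N < j)%N /\ ((x j).+1 < b)%N.
Proof.
move=> hx hnp N; case: (pselect (exists j, (N < j)%N /\ ((x j).+1 < b)%N)) => // H.
exfalso; apply: hnp; exists 1%N, N.+1; split => // k hk.
have e : forall j, (N < j)%N -> x j = b.-1.
  move=> j hj; case: (boolP ((x j).+1 < b)%N) => h.
    by exfalso; apply: H; exists j.
  have := hx j (leq_trans (ltn0Sn N) hj).
  rewrite -ltnNge ltnS in h => h2. apply/eqP; rewrite eqn_leq.
  by rewrite -ltnS (prednK (ltnW hb)) h2 -ltnS (prednK (ltnW hb)) h.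
by rewrite !e // ?addn1 // ltnW.
Qed.

Lemma nep_gt x : digits x -> ~ eper x ->
  forall N, exists j, (N < j)%N /\ (0 < x j)%N.
Proof.
move=> hx hnp N; case: (pselect (exists j, (N < j)%N /\ (0 < x j)%N)) => // H.
exfalso; apply: hnp; exists 1%N, N.+1; split => // k hk.
have e : forall j, (N < j)%N -> x j = 0%N.
  move=> j hj; case: (boolP (0 < x j)%N) => h.
    by exfalso; apply: H; exists j.
  by move: h; rewrite lt0n negbK => /eqP.
by rewrite !e // ?addn1 // ltnW.
Qed.

Lemma approx x y i p m : digits x -> ~ eper x -> digits y -> (0 < p)%N ->
  (forall j, (i < j)%N -> y (j + p)%N = y j) ->
  (forall j, (1 <= j <= m)%N -> x j = y j) ->
  exists r : rat, [/\ ratr r != val x, `|val x - ratr r| <= c ^+ m &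
      denq r <= (b ^ (i + p))%N%:Z].
Proof.
move=> hx hnp hy hp hper hag.
have [r [hr hd]] := val_rat hy hp hper.
exists r; split => //.
- rewrite hr eq_sym; apply: val_neq => //; [exact: nep_lt | exact: nep_gt |].
  case: (pselect (exists j, (1 <= j)%N /\ x j <> y j)) => // H.
  exfalso; apply: hnp; exists p, i.+1; split => // k hk.
  have e : forall j, (1 <= j)%N -> x j = y j.
    move=> j j1; apply/eqP; apply: contraT => h; exfalso; apply: H.
    by exists j; split => //; exact/eqP.
  rewrite !e ?hper //; first exact: leq_ltn_trans (leq0n i) hk.
  by rewrite addn_gt0 hp orbT.
- have h := val_agree hx hy hag; rewrite -hr in h; exact: h.
Qed.

Lemma trunc_approx x N : digits x -> ~ eper x ->
  exists r : rat, [/\ ratr r != val x, `|val x - ratr r| <= c ^+ N &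
      denq r <= (b ^ (N + 1))%N%:Z].
Proof.
move=> hx hnp.
apply: (@approx x (fun j => if (j <= N)%N then x j else 0%N)) => //.
- move=> j j1 /=; case: ifP => _; [exact: hx | exact: ltnW hb].
- move=> j hj /=; rewrite ifF; last by apply/negbTE; rewrite -ltnNge; lia.
  by rewrite ifF //; apply/negbTE; rewrite -ltnNge; lia.
- by move=> j /andP[_ ->].
Qed.

Lemma rset_approx x k m i : digits x -> ~ eper x -> (1 <= k)%N ->
  (1 <= i)%N -> (i <= m - k)%N ->
  (forall j, (j < k)%N -> x (i + j)%N = x (m - k + 1 + j)%N) ->
  (k < m)%N /\ exists r : rat, [/\ ratr r != val x, `|val x - ratr r| <= c ^+ m &
      denq r <= (b ^ (m - k))%N%:Z].
Proof.
move=> hx hnp k1 i1 im hblk.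
split; first lia.
set p := (m - k + 1 - i)%N.
have hp : (0 < p)%N by rewrite /p; lia.
have hK : (i.-1 + p = m - k)%N by rewrite /p; lia.
rewrite -hK.
have key : forall t, (i + t <= m)%N -> x (i + t)%N = x (i + t %% p)%N.
  elim/ltn_ind => t IH ht.
  case: (ltnP t p) => htp; first by rewrite modn_small.
  have e1 : (i + t = i + (t - p) + p)%N by lia.
  have e2 : (t %% p = (t - p) %% p)%N by rewrite -{1}(subnK htp) modnDr.
  rewrite e2 -IH; last by lia.
    rewrite e1 hblk; last by lia.
    congr x; lia.
  lia.
apply: (@approx x (fun j => if (j < i)%N then x j else x (i + (j - i) %% p)%N)) => //.
- move=> j j1 /=; case: ifP => _; apply: hx => //; lia.
- move=> j hj /=; rewrite ifF; last by apply/negbTE; rewrite -leqNgt; lia.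
  rewrite ifF; last by apply/negbTE; rewrite -leqNgt; lia.
  congr x; congr addn.
  by rewrite addnC -addnBA ?modnDl //; lia.
- move=> j /andP[j1 jm] /=; case: ifP => // hji.
  have := key (j - i)%N; rewrite subnKC; last by lia.
  by apply; lia.
Qed.
End Series.

Lemma rep_lt (R : realType) (x : nat -> nat) (c' : R) :
  (rep R x < c'%:E)%E -> forall N, exists k m, [/\ (N <= k)%N, r_set x k m &
     m%:R < c' * k%:R].
Proof.
move=> hr N.
have h1 : (einfs (fun n => (r_fun R x n * ((n%:R : R)^-1)%:E)%E) N.+1 < c'%:E)%E.
  apply: le_lt_trans hr; rewrite /rep limn_einf_lim.
  rewrite (cvg_lim _ (@cvg_einfs_sup R (fun n => (r_fun R x n * ((n%:R : R)^-1)%:E)%E))) //.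
  by apply: ereal_sup_ubound; exists N.+1.
have [y [k hk <-] hy] := ereal_inf_lt h1.
have k0 : (0 < k)%N by apply: leq_trans hk.
have hk' : (r_fun R x k < (c' * k%:R)%:E)%E.
  rewrite ltNge; apply/negP => h.
  have : ((c' * k%:R)%:E * ((k%:R : R)^-1)%:E <=
     r_fun R x k * ((k%:R : R)^-1)%:E)%E.
    by apply: lee_wpmul2r => //; rewrite lee_fin invr_ge0.
  rewrite -EFinM -mulrA divff ?mulr1 ?pnatr_eq0 -?lt0n //.
  by move=> h2; have := lt_le_trans hy h2; rewrite ltxx.
have [z [m hm <-] hz] := ereal_inf_lt hk'.
exists k, m; split => //; first exact: ltnW.
Qed.

Lemma Mset_le (R : realType) (xi mu mu' : R) : mu <= mu' -> Mset xi mu' -> Mset xi mu.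
Proof.
move=> hmu hM hfin; apply: hM; apply: sub_finite_set hfin => r /= h.
apply: (lt_le_trans h); apply: ler_powR; last by rewrite lerN2.
by rewrite ler1z -gtz0_ge1 denq_gt0.
Qed.

Lemma le_sup_dense (R : realType) (t s : \bar R) :
  (forall mu : R, (mu%:E < t)%E -> (mu%:E <= s)%E) -> (t <= s)%E.
Proof.
move=> h; case: t h => [r| |] h; last by rewrite leNye.
- case: s h => [s'| |] h; last 2 first.
  + by rewrite leey.
  + by have := h (r - 1) (ltac:(rewrite lte_fin; lra)).
  rewrite lee_fin leNgt; apply/negP => hs.
  have := h ((r + s') / 2) (ltac:(rewrite lte_fin; lra)); rewrite lee_fin; lra.
- by rewrite (eq_infty (fun r => h r (ltry r))) lexx.
Qed.

Lemma stepA (R : realType) b x (mu : R) : (2 <= b)%N -> digits b x -> ~ eper x ->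
  0 <= mu < 1 -> Mset (val R b x) mu.
Proof.
move=> hb hx hnp /andP[mu0 mu1]; apply: (M_of hb) => // N.
set N' := (N + Num.bound ((1 - mu)^-1))%N.
have hB := @archi_boundP _ ((1 - mu)^-1) (ltac:(rewrite invr_ge0; lra)).
have hN' : (1 - mu)^-1 < N'%:R.
  by apply: lt_le_trans hB _; rewrite ler_nat leq_addl.
have [r [h1 h2 h3]] := trunc_approx R hb N' hx hnp.
exists r, (N' + 1)%N, N'; split => //; first exact: leq_addr.
have hpos : 0 < 1 - mu by lra.
have : 1 < N'%:R * (1 - mu).
  by rewrite -ltr_pdivrMr // div1r.
rewrite natrD; nra.
Qed.

Lemma stepB (R : realType) b x (mu c' : R) : (2 <= b)%N -> digits b x -> ~ eper x ->
  1 <= mu -> (mu - 1) * c' < mu -> (rep R x < c'%:E)%E -> Mset (val R b x) mu.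
Proof.
move=> hb hx hnp mu1 hc hr; apply: (M_of hb); first lra.
move=> N; have [k [m [hk hm hmk]]] := rep_lt hr N.+1.
case: hm => m1 [i [i1 im hblk]].
have k1 : (1 <= k)%N by exact: leq_trans (ltn0Sn N) hk.
have [km [r [h1 h2 h3]]] := rset_approx R hb hx hnp k1 i1 im hblk.
exists r, (m - k)%N, m; split => //.
  exact: leq_trans (ltnW hk) (ltnW km).
rewrite (natrB _ (ltnW km)).
have kp : (0 : R) < k%:R by rewrite ltr0n.
have e1 : (mu - 1) * m%:R <= (mu - 1) * (c' * k%:R).
  by apply: ler_wpM2l; [lra | exact: ltW].
have e2 : (mu - 1) * c' * k%:R < mu * k%:R by rewrite ltr_pM2r.
have -> : mu * (m%:R - k%:R) = (mu - 1) * m%:R + m%:R - mu * k%:R by ring.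
rewrite mulrA in e1.
set A := (mu - 1) * m%:R in e1 *; set B := (mu - 1) * c' * k%:R in e1 e2.
set C := mu * k%:R in e2 *.
rewrite /A /B /C in e1 e2 *. lra.
Qed.

Lemma ratio_ok (R : realType) (s mu : R) : 1 <= mu -> s * (mu - 1) < mu ->
  exists c' : R, s < c' /\ (mu - 1) * c' < mu.
Proof.
move=> mu1 hs.
have mu0 : 0 < mu by lra.
set d := mu - s * (mu - 1).
have d0 : 0 < d by rewrite /d; lra.
set e := d / (2 * mu).
have e0 : 0 < e by rewrite /e divr_gt0 //; lra.
have ed : e * (2 * mu) = d by rewrite /e divfK // gt_eqF //; lra.
exists (s + e); split; first lra.
have : (mu - 1) * e < 2 * mu * e by rewrite ltr_pM2r //; lra.
rewrite /d in ed; nra.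
Qed.

Unset Implicit Arguments. Set Strict Implicit.
Local Close Scope classical_set_scope.

Theorem theorem4p2 (R : realType) (b : nat) (x : nat -> nat) :
  (2 <= b)%N ->
  (forall k : nat, (1 <= k)%N -> (x k < b)%N) ->
  ~ eventually_periodic x ->
  (rep_bound (rep R x) <= irrationality_exponent (xi_word R x b))%E.
Proof.
move=> hb hx hnp.
have hx' : digits b x := hx.
have hnp' : ~ eper x := hnp.
have -> : xi_word R x b = val R b x by [].
rewrite /irrationality_exponent.
apply: le_sup_dense => mu hmu.
suff hM : Mset (val R b x) mu.
  by apply: ereal_sup_ubound; exists mu.
case: (ltP mu 1) => [mu1|mu1].
  apply: (@Mset_le R _ mu (Num.max mu 0)); first by rewrite le_max lexx.
  apply: stepA => //; rewrite le_max lexx orbT /= gt_max mu1 /=; lra.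
move: hmu; rewrite /rep_bound; case hr: (rep R x) => [s| |] hmu.
- have hs : s * (mu - 1) < mu.
    move: hmu; case: eqP => [-> _ | hs1 hmu]; first lra.
    rewrite lte_fin in hmu.
    case: (ltrgtP s 1) => hs; last by exfalso; exact: hs1.
    + rewrite ltr_ndivlMr in hmu; last lra. nra.
    + rewrite ltr_pdivlMr in hmu; last lra. nra.
  have [c' [hsc hc]] := ratio_ok mu1 hs.
  apply: (stepB (c' := c')) => //.
  by rewrite hr lte_fin.
- by rewrite lte_fin in hmu; lra.
- apply: (stepB (c' := 1)) => //; first lra.
  by rewrite hr ltNye.
Qed.
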